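(* Let $\varphi(x)=\sum_{i\ge0}\gamma_ix^i\in\mathbb{K}[[x]]$, let $r\in\mathbb{Z}$, and stipulate $\gamma_i=0$ for $i<0$. Then $\varphi\in\mathcal{F}_r$ if and only if the following hold. If $r=2k$ is even: for each $n\ge\max\{0,1-k\}$, $$\gamma_{2n}=\frac{2}{2n+r}\sum_{i=-k}^n\binom{2n+r}{2i+r}B_{2n-2i}\gamma_{2i+1}, \qquad (\ast)$$ and, if $r\le0$, then $\gamma_{1-r}=0$ (with no condition imposed on $\gamma_{-r}$), and, when $r<0$, for $0\le n\le -k-1$, $$\gamma_{2n}=\sum_{i=0}^n\frac{2}{2i+r}\binom{-2i-r}{-2n-r}B_{2n-2i}\gamma_{2i+1}. \qquad (\ast\ast)$$ If $r=2k+1$ is odd: $(\ast)$ holds for each $n\ge\max\{0,-k\}$, and, if $r<0$, $(\ast\ast)$ holds for $0\le n\le -k-1$. In particular these conditions determine all $\gamma_{2i}$ from the $\gamma_{2i+1}$, except $\gamma_{-r}$ when $r\le0$ is even, which is unconstrained.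
   Context: $\mathbb{K}\in\{\mathbb{Q},\mathbb{R},\mathbb{C}\}$. For $r\in\mathbb{Z}$, $\mathcal{F}_r$ denotes the space of $\varphi\in\mathbb{K}[[x]]$ with $\varphi(x/(x-1))=(1-x)^r\varphi(x)$. $B_n$ is the $n$th Bernoulli number, $\frac{t}{e^t-1}=\sum_{n\ge0}B_n\frac{t^n}{n!}$. *)

(* Defs.v *)
From mathcomp Require Import all_boot all_order all_algebra.
Set Implicit Arguments. Unset Strict Implicit. Unset Printing Implicit Defensive.
Import Order.TTheory GRing.Theory Num.Theory.
Local Open Scope ring_scope.

Section Defs.
Variable K : numFieldType.

(* Formal power series over K, represented by their coefficient sequences:
   f : nat -> K stands for sum_n f n x^n. *)

Definition smul (f g : nat -> K) : nat -> K :=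
  fun n => \sum_(i < n.+1) f i * g (n - i)%N.

Definition sone : nat -> K := fun n => (n == 0%N)%:R.
Definition sX : nat -> K := fun n => (n == 1%N)%:R.

Definition spow (f : nat -> K) (m : nat) : nat -> K := iter m (smul f) sone.

(* 1 - x, and its inverse 1/(1-x) = sum_n x^n *)
Definition one_minus_x : nat -> K := fun n => (n == 0%N)%:R - (n == 1%N)%:R.
Definition geom : nat -> K := fun _ => 1.

(* (1-x)^r for r : int: (1-x)^m for r = m >= 0, (1/(1-x))^(m+1) for r = -(m+1) *)
Definition powr (r : int) : nat -> K :=
  match r with
  | Posz m => spow one_minus_x m
  | Negz m => spow geom m.+1
  end.

(* the series x/(x-1) = x * (x-1)^{-1} = x * (- 1/(1-x)) *)
Definition yser : nat -> K := smul sX (fun _ => -1).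

(* composition f(g) for g with zero constant term:
   coefficient N is sum_{i <= N} f_i [x^N] g^i *)
Definition scomp (f g : nat -> K) : nat -> K :=
  fun N => \sum_(i < N.+1) f i * spow g i N.

Definition inF (r : int) (phi : nat -> K) : Prop :=
  forall N : nat, scomp phi yser N = smul (powr r) phi N.

(* Bernoulli numbers, t/(e^t-1) = sum_n B_n t^n/n!.  Writing b_n = B_n/n!,
   this identity of formal power series is equivalent (multiply by
   (e^t-1)/t = sum_j t^j/(j+1)!) to b_0 = 1 and
   sum_{k<=n} b_k/(n-k+1)! = 0 for n >= 1, i.e.
   b_n = - sum_{k<n} b_k / (n-k+1)!.  bern_b_list n = [:: b_0; ...; b_n]. *)
Fixpoint bern_b_list (n : nat) : seq K :=
  match n with
  | 0%N => [:: 1]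
  | m.+1 => let s := bern_b_list m in
            rcons s (- \sum_(k < m.+1) s`_k / ((m.+2 - k)`!)%:R)
  end.

Definition bernoulli (n : nat) : K := (n`!)%:R * (bern_b_list n)`_n.

Definition zbinom (a b : int) : K :=
  if b < 0 then 0
  else (\prod_(i < absz b) (a - i%:Z)%:~R) / ((absz b)`!)%:R.

Definition gam (phi : nat -> K) (i : int) : K :=
  match i with
  | Posz m => phi m
  | Negz _ => 0
  end.

(* condition ( * ) at n, for r = 2k or 2k+1:
   gamma_{2n} = 2/(2n+r) sum_{i=-k}^n binom(2n+r,2i+r) B_{2n-2i} gamma_{2i+1}.
   The index i = j - k with j = 0 .. n+k. *)
Definition star (phi : nat -> K) (r k n : int) : Prop :=
  gam phi (2 * n) =
    2 / ((2 * n + r)%:~R) *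
    \sum_(j < absz ((n + k + 1)%R))
      (zbinom (2 * n + r) (2 * (j%:Z - k) + r) *
       bernoulli (absz ((2 * n - 2 * (j%:Z - k))%R)) *
       gam phi (2 * (j%:Z - k) + 1)).

Definition starstar (phi : nat -> K) (r n : int) : Prop :=
  gam phi (2 * n) =
    \sum_(i < absz ((n + 1)%R))
      (2 / ((2 * i%:Z + r)%:~R) *
       zbinom (- 2 * i%:Z - r) (- 2 * n - r) *
       bernoulli (absz ((2 * n - 2 * i%:Z)%R)) *
       gam phi (2 * i%:Z + 1)).

End Defs.

(* Main.v *)
Require Import Defs.
From mathcomp Require Import all_boot all_order all_algebra.
From mathcomp Require Import ring zify.
From Stdlib Require Import FunctionalExtensionality.
Import Order.TTheory GRing.Theory Num.Theory.
Local Open Scope ring_scope.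
Set Implicit Arguments. Unset Strict Implicit. Unset Printing Implicit Defensive.

Section Ser.
Variable K : numFieldType.
Implicit Types f g h : nat -> K.

Definition sadd f g : nat -> K := fun n => f n + g n.
Definition sscal (c : K) f : nat -> K := fun n => c * f n.

Definition tp f n : {poly K} := \poly_(i < n.+1) f i.

Lemma smul_tp f g n m : (n <= m)%N -> smul f g n = (tp f m * tp g m)`_n.
Proof.
move=> le; rewrite coefM /smul; apply: eq_bigr => i _; rewrite !coef_poly.
have hi := ltn_ord i.
rewrite ifT; last by lia.
rewrite ifT //; lia.
Qed.

Lemma coefM_eql (p q s : {poly K}) n :
  (forall j, (j <= n)%N -> p`_j = q`_j) -> (p * s)`_n = (q * s)`_n.
Proof.
move=> H; rewrite !coefM; apply: eq_bigr => i _; rewrite H //.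
by have := ltn_ord i.
Qed.

Lemma smulC f g : smul f g = smul g f.
Proof.
apply: functional_extensionality => n.
by rewrite (smul_tp f g (leqnn n)) (smul_tp g f (leqnn n)) mulrC.
Qed.

Lemma smulA f g h : smul (smul f g) h = smul f (smul g h).
Proof.
apply: functional_extensionality => n.
rewrite (smul_tp _ _ (leqnn n)) (smul_tp f _ (leqnn n)).
rewrite (@coefM_eql _ (tp f n * tp g n)); last first.
  by move=> j hj; rewrite coef_poly ltnS hj (smul_tp _ _ hj).
rewrite -mulrA mulrC [in RHS]mulrC.
apply: coefM_eql => j hj; rewrite coef_poly ltnS hj (smul_tp _ _ hj).
by rewrite mulrC.
Qed.

Lemma smulDl f g h : smul (sadd f g) h = sadd (smul f h) (smul g h).
Proof.
apply: functional_extensionality => n.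
by rewrite /smul /sadd -big_split; apply: eq_bigr => i _; rewrite mulrDl.
Qed.

Lemma smulDr f g h : smul f (sadd g h) = sadd (smul f g) (smul f h).
Proof. by rewrite smulC smulDl !(smulC f). Qed.

Lemma smulZl c f g : smul (sscal c f) g = sscal c (smul f g).
Proof.
apply: functional_extensionality => n.
by rewrite /smul /sscal mulr_sumr; apply: eq_bigr => i _; rewrite mulrA.
Qed.

Lemma smulZr c f g : smul f (sscal c g) = sscal c (smul f g).
Proof. by rewrite smulC smulZl smulC. Qed.

Lemma smul1l f : smul (sone K) f = f.
Proof.
apply: functional_extensionality => n.
rewrite /smul big_ord_recl /= /sone /= mul1r subn0 big1 ?addr0 // => i _.
by rewrite mul0r.
Qed.

Lemma smul1r f : smul f (sone K) = f.
Proof. by rewrite smulC smul1l. Qed.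

Lemma smulX f n : smul (sX K) f n = if n is m.+1 then f m else 0.
Proof.
rewrite /smul /sX; case: n => [|m].
  by rewrite big_ord_recl big_ord0 /= mul0r addr0.
rewrite big_ord_recl big_ord_recl /= mul0r add0r mul1r subSS subn0.
rewrite big1 ?addr0 // => i _; by rewrite mul0r.
Qed.

End Ser.

Section Binom.
Variable K : numFieldType.
Implicit Types f g h : nat -> K.

Lemma sum_widen (F : nat -> K) m n : (m <= n)%N ->
  (forall i, (m <= i)%N -> (i < n)%N -> F i = 0) ->
  \sum_(i < m) F i = \sum_(i < n) F i.
Proof.
move=> le H; rewrite (big_ord_widen n F le) big_mkcond /=.
apply: eq_bigr => i _; case: ifP => // /negbT; rewrite -leqNgt => h.
by rewrite H.
Qed.

Lemma sum_shift (F : nat -> K) i N : (i <= N)%N ->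
  \sum_(M < N) F M = \sum_(M < i) F M + \sum_(j < N - i) F (i + j)%N.
Proof.
move=> le; rewrite -!(big_mkord xpredT) (big_cat_nat (leq0n i) le) /=.
congr (_ + _); rewrite -{1}(add0n i) big_addn.
by rewrite big_mkord; apply: eq_bigr => j _; rewrite addnC.
Qed.

Definition gb (a : K) (n : nat) : K := (\prod_(l < n) (a - l%:R)) / (n`!)%:R.

Lemma gb0 a : gb a 0 = 1.
Proof. by rewrite /gb big_ord0 fact0 divr1. Qed.

Lemma fact_neq0 n : (n`!)%:R != 0 :> K.
Proof. by rewrite pnatr_eq0 -lt0n fact_gt0. Qed.

Lemma gb_pascal a n : gb (a + 1) n.+1 = gb a n.+1 + gb a n.
Proof.
rewrite /gb big_ord_recl big_ord_recr /=.
have -> : \prod_(i < n) (a + 1 - (bump 0 i)%:R) = \prod_(i < n) (a - i%:R).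
  by apply: eq_bigr => i _; rewrite /bump /= add1n -addn1 natrD; ring.
set P := \prod_(i < n) (a - i%:R).
rewrite factS natrM.
have h1 := fact_neq0 n.
have h2 : (n.+1)%:R != 0 :> K by rewrite pnatr_eq0.
rewrite -natr1 in h2 *.
field; by rewrite h1 h2.
Qed.

Lemma hockey a n : \sum_(j < n.+1) gb (a + j%:R) j = gb (a + (n.+1)%:R) n.
Proof.
elim: n => [|n IH]; first by rewrite big_ord_recl big_ord0 !gb0 addr0.
rewrite big_ord_recr /= IH.
have -> : a + (n.+2)%:R = (a + (n.+1)%:R) + 1 by rewrite -natr1 addrA.
by rewrite gb_pascal addrC.
Qed.

Definition E (a : K) : nat -> K := fun N => gb (N%:R + a - 1) N.

Lemma E_geom a : smul (E a) (geom K) = E (a + 1).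
Proof.
apply: functional_extensionality => N.
rewrite /smul /geom /E.
under eq_bigr do rewrite mulr1.
rewrite (eq_bigr (fun j : 'I_N.+1 => gb (a - 1 + (nat_of_ord j)%:R) j)); last first.
  by move=> j _; congr gb; ring.
rewrite hockey; congr gb; rewrite -natr1; ring.
Qed.

Lemma E_omx a : smul (E a) (one_minus_x K) = E (a - 1).
Proof.
apply: functional_extensionality => N.
rewrite /smul /one_minus_x /E.
case: N => [|m].
  by rewrite big_ord_recl big_ord0 /= !gb0 subr0 mulr1 addr0.
rewrite big_ord_recr big_ord_recr /=.
rewrite big1; last first.
  move=> i _; have hi := ltn_ord i.
  have h0 : (m.+1 - i == 0)%N = false by apply/eqP; lia.
  have h1 : (m.+1 - i == 1)%N = false by apply/eqP; lia.
  by rewrite h0 h1 subrr mulr0.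
rewrite subSn // subnn subnn /= add0r subr0 sub0r mulr1 mulrN1.
have := gb_pascal (m%:R + a - 1) m.
rewrite (_ : m%:R + a - 1 + 1 = m.+1%:R + a - 1); last by rewrite -natr1; ring.
move=> ->; rewrite (_ : m.+1%:R + (a - 1) - 1 = m%:R + a - 1); last by rewrite -natr1; ring.
ring.
Qed.

Lemma E0 : E 0 = sone K.
Proof.
apply: functional_extensionality => N; rewrite /E /sone.
case: N => [|m]; first by rewrite gb0.
rewrite /gb big_ord_recr /= (_ : m.+1%:R + 0 - 1 - m%:R = 0 :> K).
  by rewrite mulr0 mul0r.
by rewrite -natr1; ring.
Qed.

Lemma spow_omx m a : smul (spow (one_minus_x K) m) (E a) = E (a - m%:R).
Proof.
elim: m a => [|m IH] a; first by rewrite /spow /= smul1l subr0.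
rewrite /spow iterS -/(spow _ m) (smulC (one_minus_x K)) smulA (smulC (one_minus_x K)).
by rewrite E_omx IH -natr1; congr E; ring.
Qed.

Lemma spow_geom m a : smul (spow (geom K) m) (E a) = E (a + m%:R).
Proof.
elim: m a => [|m IH] a; first by rewrite /spow /= smul1l addr0.
rewrite /spow iterS -/(spow _ m) (smulC (geom K)) smulA (smulC (geom K)).
by rewrite E_geom IH -natr1; congr E; ring.
Qed.

Lemma powrE r : smul (powr K r) (E r%:~R) = sone K.
Proof.
case: r => [m|m] /=.
  by rewrite spow_omx -E0; congr E; rewrite subrr.
by rewrite (_ : smul (geom K) (spow (geom K) m) = spow (geom K) m.+1) // spow_geom NegzE -E0; congr E; rewrite mulrNz -natr1; ring.
Qed.

Lemma yserE n : yser K n = if n is m.+1 then -1 else 0.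
Proof. by rewrite /yser smulX. Qed.

Lemma smul_yser f N : smul (yser K) f N = - \sum_(M < N) f M.
Proof.
rewrite /smul big_ord_recl yserE mul0r add0r.
rewrite (eq_bigr (fun i : 'I_N => - f (N - i.+1)%N)); last first.
  by move=> i _; rewrite yserE /= /bump /= add1n mulN1r.
rewrite sumrN; congr (- _).
rewrite (reindex_inj rev_ord_inj) /=; apply: eq_bigr => i _.
congr f; have := ltn_ord i; lia.
Qed.

Lemma spow_yser_low i N : (N < i)%N -> spow (yser K) i N = 0.
Proof.
elim: i N => [|i IH] N //= lt.
rewrite -/(spow _ i) smul_yser big1 ?oppr0 // => M _.
apply: IH; have := ltn_ord M; lia.
Qed.

Lemma Zform rho i N : smul (E rho) (spow (yser K) i) N =
  if (i <= N)%N then (-1)^+i * gb (N%:R + rho - 1) (N - i) else 0.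
Proof.
elim: i N => [|i IH] N.
  by rewrite /spow /= smul1r expr0 mul1r subn0.
rewrite (_ : spow (yser K) i.+1 = smul (yser K) (spow (yser K) i)) //.
rewrite -smulA (smulC (E rho)) smulA smul_yser.
under eq_bigr do rewrite IH.
case: (leqP i.+1 N) => h.
  rewrite (sum_shift (fun M => if (i <= M)%N then (-1) ^+ i * gb (M%:R + rho - 1) (M - i) else 0) (ltnW h)) big1; last first.
    by move=> M _; have := ltn_ord M; case: leqP => //; lia.
  rewrite add0r.
  under eq_bigr do rewrite leq_addr addKn.
  rewrite -mulr_sumr.
  have -> : (N - i = (N - i.+1).+1)%N by lia.
  rewrite (eq_bigr (fun j : 'I_(N - i.+1).+1 => gb ((i%:R + rho - 1) + (nat_of_ord j)%:R) j)); last first.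
    by move=> j _; congr gb; rewrite natrD; ring.
  have e : ((N - i.+1).+1)%:R = N%:R - i%:R :> K.
    by rewrite -natrB; [congr (_%:R); lia | lia].
  rewrite hockey exprS e (_ : i%:R + rho - 1 + (N%:R - i%:R) = N%:R + rho - 1); last by ring.
  ring.
rewrite big1 ?oppr0 // => M _; have := ltn_ord M; case: (leqP i M) => //; lia.
Qed.

Lemma smulE_scomp rho phi N : smul (E rho) (scomp phi (yser K)) N =
  \sum_(i < N.+1) phi i * smul (E rho) (spow (yser K) i) N.
Proof.
rewrite /smul /scomp.
rewrite (eq_bigr (fun j : 'I_N.+1 => \sum_(i < N.+1) E rho j * (phi i * spow (yser K) i (N - j)))); last first.
  move=> j _; rewrite mulr_sumr; apply: (@sum_widen (fun i => E rho j * (phi i * spow (yser K) i (N - j))) (N - j).+1 N.+1).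
    by have := ltn_ord j; lia.
  by move=> i h1 h2; rewrite spow_yser_low ?mulr0 //; lia.
rewrite exchange_big /=; apply: eq_bigr => i _; rewrite mulr_sumr.
by apply: eq_bigr => j _; ring.
Qed.

Definition Rcond (r : int) (phi : nat -> K) := forall N, phi N =
  \sum_(i < N.+1) phi i * ((-1)^+i * gb (N%:R + r%:~R - 1) (N - i)).

Lemma inF_R r phi : inF r phi <-> Rcond r phi.
Proof.
split.
  move=> H N.
  have HS : scomp phi (yser K) = smul (powr K r) phi by apply: functional_extensionality.
  rewrite -{1}(smul1l phi) -(powrE r) (smulC (powr K r)) smulA -HS smulE_scomp.
  apply: eq_bigr => i _; rewrite Zform; have := ltn_ord i; rewrite ltnS => ->.
  by [].
move=> H.
have HR : phi = smul (E r%:~R) (scomp phi (yser K)).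
  apply: functional_extensionality => N; rewrite smulE_scomp {1}H.
  apply: eq_bigr => i _; rewrite Zform; have := ltn_ord i; rewrite ltnS => -> //.
move=> N; rewrite {2}HR -smulA powrE smul1l //.
Qed.

End Binom.

Section Bern.
Variable K : numFieldType.
Implicit Types f g h : nat -> K.

Definition ex : nat -> K := fun n => 1 / (n`!)%:R.
Definition uu : nat -> K := fun n => 1 / ((n.+1)`!)%:R.
Definition bb : nat -> K := fun n => (bern_b_list K n)`_n.
Definition neg f : nat -> K := fun n => (-1)^+n * f n.

Lemma size_bern n : size (bern_b_list K n) = n.+1.
Proof. by elim: n => //= n IH; rewrite size_rcons IH. Qed.

Lemma bern_nth n k : (k <= n)%N -> (bern_b_list K n)`_k = bb k.
Proof.
elim: n => [|n IH]; first by rewrite leqn0 => /eqP ->.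
rewrite leq_eqVlt => /orP [/eqP -> //|].
rewrite ltnS => hk /=; rewrite nth_rcons size_bern ltnS hk; exact: IH.
Qed.

Lemma bb_rec m : bb m.+1 = - \sum_(k < m.+1) bb k / ((m.+2 - k)`!)%:R.
Proof.
rewrite /bb /= nth_rcons size_bern ltnn eqxx; congr (- _).
by apply: eq_bigr => k _; rewrite bern_nth // -ltnS.
Qed.

Lemma bb0 : bb 0 = 1.
Proof. by []. Qed.

Lemma uu_bb : smul uu bb = sone K.
Proof.
rewrite smulC; apply: functional_extensionality => n; rewrite /smul /sone.
case: n => [|m].
  by rewrite big_ord_recl big_ord0 addr0 bb0 /uu /= mul1r divr1.
rewrite big_ord_recr /= subnn /uu bb_rec /= (_ : (1`!)%:R = 1 :> K) // divr1 mulr1.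
rewrite (eq_bigr (fun k : 'I_m.+1 => bb k / ((m.+2 - k)`!)%:R)); first by rewrite subrr.
move=> k _; rewrite mul1r; congr (_ / (_`!)%:R); have := ltn_ord k; lia.
Qed.

Lemma neg_smul f g : neg (smul f g) = smul (neg f) (neg g).
Proof.
apply: functional_extensionality => n; rewrite /neg /smul mulr_sumr.
apply: eq_bigr => i _; have hi := ltn_ord i.
have -> : (-1) ^+ n = (-1) ^+ i * (-1) ^+ (n - i) :> K.
  by rewrite -exprD; congr (_ ^+ _); lia.
ring.
Qed.

Lemma altbin n : \sum_(j < n.+1) (-1)^+j * ('C(n.+1, j.+1))%:R = 1 :> K.
Proof.
have := exprBn (1 : K) 1 n.+1; rewrite subrr expr0n /= big_ord_recl /=.
rewrite expr0 bin0 mul1r expr1n mulr1 => /esym H.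
have : \sum_(i < n.+1) (-1) ^+ (bump 0 i) * 1 ^+ (n.+1 - bump 0 i) * 1 ^+ bump 0 i *+ 'C(n.+1, bump 0 i) = - 1 :> K.
  by move: H; rewrite expr1n mulr1n => /eqP; rewrite addrC addr_eq0 => /eqP.
move=> H2.
transitivity (- \sum_(i < n.+1) (-1) ^+ (bump 0 i) * 1 ^+ (n.+1 - bump 0 i) * 1 ^+ bump 0 i *+ 'C(n.+1, bump 0 i) : K); last by rewrite H2 opprK.
rewrite -sumrN; apply: eq_bigr => j _.
rewrite /bump /= add1n !expr1n !mulr1 exprS mulr_natr; ring.
Qed.

Lemma ex_neguu : smul ex (neg uu) = uu.
Proof.
rewrite smulC; apply: functional_extensionality => n; rewrite /smul /neg /uu /ex.
have hn := fact_neq0 K n.+1.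
rewrite [RHS](_ : 1 / _ = (\sum_(j < n.+1) (-1)^+j * ('C(n.+1, j.+1))%:R) * (1 / ((n.+1)`!)%:R)); last first.
  by rewrite altbin [RHS]mul1r.
rewrite mulr_suml; apply: eq_bigr => j _.
have hj := ltn_ord j.
have hb := @bin_fact n.+1 j.+1 hj.
have e : (n.+1 - j.+1 = n - j)%N by lia.
rewrite e in hb.
have h1 := fact_neq0 K j.+1; have h2 := fact_neq0 K (n - j).
have hb' : ('C(n.+1, j.+1))%:R * ((j.+1)`!%:R * (n - j)`!%:R) = (n.+1)`!%:R :> K.
  by rewrite -!natrM hb.
rewrite -hb'; field; by rewrite h1 h2 pnatr_eq0 -lt0n bin_gt0.
Qed.

Lemma smul_uu_last f m : smul uu f m = \sum_(i < m) f i * uu (m - i) + f m.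
Proof.
rewrite smulC /smul big_ord_recr /= subnn /uu.
by rewrite (_ : (1`!)%:R = 1 :> K) // divr1 mulr1.
Qed.

Lemma uu_zero g L : (forall m, (m < L)%N -> smul uu g m = 0) <->
  (forall m, (m < L)%N -> g m = 0).
Proof.
split => H.
  suff: forall n m, (m <= n)%N -> (m < L)%N -> g m = 0.
    by move=> H2 m; apply: H2 (leqnn m).
  elim => [|n IH] m.
    rewrite leqn0 => /eqP -> hL; have := H 0%N hL.
    by rewrite smul_uu_last big_ord0 add0r.
  rewrite leq_eqVlt => /orP [/eqP -> hL|]; last by rewrite ltnS; apply: IH.
  have := H _ hL; rewrite smul_uu_last big1 ?add0r //.
  move=> i _; rewrite IH ?mul0r //; have := ltn_ord i; lia.
move=> m hm; rewrite smul_uu_last H // addr0 big1 // => i _.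
rewrite H ?mul0r //; have := ltn_ord i; lia.
Qed.

Lemma uu_cancel f g : smul uu f = smul uu g -> f = g.
Proof.
move=> H; apply: functional_extensionality => n.
suff: forall n m, (m <= n)%N -> f m = g m by move=> H2; apply: H2 (leqnn n).
elim => [|p IH] m.
  rewrite leqn0 => /eqP ->; have := congr1 (fun F => F 0%N) H.
  by rewrite /= !smul_uu_last !big_ord0 !add0r.
rewrite leq_eqVlt => /orP [/eqP ->|]; last by rewrite ltnS; apply: IH.
have := congr1 (fun F => F p.+1) H; rewrite /= !smul_uu_last.
rewrite (eq_bigr (fun i : 'I_p.+1 => g i * uu (p.+1 - i))).
  by move/addrI.
move=> i _; rewrite IH //; have := ltn_ord i; lia.
Qed.

Lemma sX_uu : smul (sX K) uu = sadd ex (sscal (-1) (sone K)).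
Proof.
apply: functional_extensionality => n; rewrite smulX /sadd /sscal /ex /sone.
case: n => [|m] /=; last by rewrite /uu mulr0 addr0.
by rewrite (_ : (0`!)%:R = 1 :> K) // divr1 mulr1 subrr.
Qed.

Lemma bn_eq : sadd (neg bb) (sscal (-1) (sX K)) = bb.
Proof.
apply: uu_cancel; rewrite uu_bb smulDr smulZr -ex_neguu smulA -neg_smul uu_bb.
rewrite (_ : neg (sone K) = sone K); last first.
  apply: functional_extensionality => n; rewrite /neg /sone.
  by case: n => [|n] /=; rewrite ?expr0 ?mul1r ?mulr0.
rewrite smul1r ex_neguu smulC sX_uu.
apply: functional_extensionality => n; rewrite /sadd /sscal; ring.
Qed.

Lemma bb_odd m : bb (m.*2.+1) = if m == 0%N then -1/2 else 0.
Proof.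
have := congr1 (fun F => F m.*2.+1) bn_eq.
rewrite /= /sadd /neg /sscal /sX -signr_odd /= odd_double /= expr1.
have h2 : (2 : K) != 0 by rewrite pnatr_eq0.
case: (m =P 0%N) => [-> | hm] /= => H.
  apply: (mulfI h2).
  rewrite (_ : 2 * (-1/2) = -1 :> K); last by field.
  transitivity (bb 1 + bb 1); first by ring.
  rewrite -{2}H; ring.
have e : (m.*2.+1 == 1)%N = false by apply/eqP; lia.
move: H; rewrite e mulr0 addr0 => H.
apply: (mulfI h2); rewrite mulr0.
transitivity (bb m.*2.+1 + bb m.*2.+1); first by ring.
rewrite -{2}H; ring.
Qed.

Definition Cp f : nat -> K := fun n => if odd n then 0 else f n.+1.
Definition GG f : nat -> K := sadd f (sscal 2 (smul (Cp f) bb)).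

Lemma D_G f n : (-1)^+n * f n - smul ex f n = - smul (sX K) (smul uu (GG f)) n.
Proof.
rewrite /GG smulDr smulZr -smulA (smulC uu (Cp f)) smulA uu_bb smul1r.
rewrite smulDr smulZr -smulA sX_uu smulDl smulZl smul1l.
rewrite /sadd /sscal smulX /Cp.
case: n => [|m]; first by rewrite expr0; ring.
rewrite -signr_odd /=; case: (odd m) => /=; rewrite ?expr0 ?expr1; ring.
Qed.

Lemma sum_evod (F : nat -> K) n :
  \sum_(j < n.*2) F j = \sum_(i < n) F i.*2 + \sum_(i < n) F i.*2.+1.
Proof.
elim: n => [|n IH]; first by rewrite !big_ord0 addr0.
rewrite doubleS big_ord_recr big_ord_recr /= IH !big_ord_recr /=; ring.
Qed.

Lemma GG_even f n : GG f n.*2 = f n.*2 + 2 * \sum_(i < n.+1) f (i.*2.+1) * bb (n.*2 - i.*2).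
Proof.
rewrite /GG /sadd /sscal; congr (_ + 2 * _).
rewrite /smul big_ord_recr /= (sum_evod (fun j => Cp f j * bb (n.*2 - j))).
have Ho : \sum_(i < n) Cp f i.*2.+1 * bb (n.*2 - i.*2.+1) = 0.
  by apply: big1 => i _; rewrite /Cp /= odd_double /= mul0r.
rewrite Ho addr0 [in RHS]big_ord_recr /=.
congr (_ + _); last by rewrite /Cp odd_double.
by apply: eq_bigr => i _; rewrite /Cp odd_double.
Qed.

Lemma GG_odd f n : GG f n.*2.+1 = 0.
Proof.
rewrite /GG /sadd /sscal.
have -> : smul (Cp f) bb n.*2.+1 = - f n.*2.+1 / 2.
  rewrite /smul -doubleS (sum_evod (fun j => Cp f j * bb (n.*2.+1 - j))).
  rewrite [X in _ + X]big1 ?addr0; last first.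
    by move=> i _; rewrite /Cp /= odd_double /= mul0r.
  rewrite big_ord_recr /= big1 ?add0r; last first.
    move=> i _; have hi := ltn_ord i.
    rewrite (_ : (n.*2.+1 - i.*2 = (n - i).*2.+1)%N); last by rewrite doubleB; lia.
    rewrite bb_odd (_ : (n - i == 0)%N = false) ?mulr0 //; apply/eqP; lia.
  rewrite /Cp odd_double (_ : (n.*2.+1 - n.*2 = 0.*2.+1)%N); last by lia.
  by rewrite bb_odd /=; ring.
have h2 : (2 : K) != 0 by rewrite pnatr_eq0.
by field.
Qed.

Lemma D_zero_iff f L :
  (forall N, (N <= L)%N -> (-1)^+N * f N - smul ex f N = 0) <->
  (forall m, (m < L)%N -> GG f m = 0).
Proof.
rewrite -uu_zero; split => H.
  move=> m hm; have := H m.+1 hm; rewrite D_G smulX.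
  by move/eqP; rewrite oppr_eq0 => /eqP.
move=> N hN; rewrite D_G smulX; case: N hN => [|m] hm; first by rewrite oppr0.
by rewrite H ?oppr0.
Qed.

Lemma D_zero_all f :
  (forall N, (-1)^+N * f N - smul ex f N = 0) <-> (forall m, GG f m = 0).
Proof.
split => H.
  move=> m; have [H1 _] := D_zero_iff f m.+1; apply: H1 => //.
move=> N; have [_ H2] := D_zero_iff f N; by apply: H2.
Qed.

End Bern.

Section Split.
Variable K : numFieldType.
Implicit Types f g h : nat -> K.

Lemma sgnK N (x : K) : (-1)^+N * ((-1)^+N * x) = x.
Proof. by rewrite mulrA -exprD -signr_odd oddD addbb expr0 mul1r. Qed.

Lemma gb_nat n k : gb (n%:R : K) k = ('C(n, k))%:R.
Proof.
elim: n k => [|n IH] [|k]; rewrite ?gb0 ?bin0 //.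
  by rewrite /gb big_ord_recl /= subrr mul0r mul0r.
by rewrite -natr1 gb_pascal !IH -natrD binS.
Qed.

Lemma gb_neg (b : K) k : gb (- b) k = (-1)^+k * gb (b + k%:R - 1) k.
Proof.
rewrite /gb mulrA; congr (_ / _).
rewrite (eq_bigr (fun l : 'I_k => - (b + l%:R))); last by move=> l _; ring.
rewrite prodrN card_ord; congr (_ * _).
rewrite (reindex_inj rev_ord_inj) /=; apply: eq_bigr => l _.
have hl := ltn_ord l.
rewrite natrB //; rewrite -natr1; ring.
Qed.

Definition Rn (r : int) (phi : nat -> K) N := phi N =
  \sum_(i < N.+1) phi i * ((-1)^+i * gb (N%:R + r%:~R - 1) (N - i)).

Definition aW (p i0 : nat) (phi : nat -> K) : nat -> K :=
  fun i => if (i0 <= i)%N then phi i / ((i - i0 + p)`!)%:R else 0.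

Lemma smul_ex_neg f N : smul (ex K) (neg f) N =
  \sum_(j < N.+1) (-1)^+j * f j / ((N - j)`!)%:R.
Proof.
rewrite smulC /smul /neg /ex; apply: eq_bigr => j _; ring.
Qed.

Lemma high_N (p i0 : nat) (phi : nat -> K) (r : int) (N : nat) :
  (i0 == 0)%N || (p == 0)%N -> r%:~R = 1 + p%:R - i0%:R :> K -> (i0 <= N)%N ->
  Rn r phi N <-> (-1)^+N * neg (aW p i0 phi) N - smul (ex K) (neg (aW p i0 phi)) N = 0.
Proof.
move=> hp hr hN.
set M := (N - i0 + p)%N.
have hM : N%:R + r%:~R - 1 = M%:R :> K.
  by rewrite hr /M natrD natrB //; ring.
have hMf := fact_neq0 K M.
rewrite /Rn hM /neg sgnK smul_ex_neg.
have e1 : phi N = (M`!)%:R * aW p i0 phi N.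
  by rewrite /aW hN /M; field.
have e2 : \sum_(i < N.+1) phi i * ((-1) ^+ i * gb M%:R (N - i)) =
   (M`!)%:R * \sum_(j < N.+1) (-1) ^+ j * aW p i0 phi j / (N - j)`!%:R.
  rewrite mulr_sumr; apply: eq_bigr => i _; have hi := ltn_ord i.
  rewrite gb_nat /aW; case: ifP => [hi0|/negbT hi0]; last rewrite -ltnNge in hi0.
    have hle : (N - i <= M)%N by rewrite /M; lia.
    have hb := @bin_fact M (N - i) hle.
    have e : (M - (N - i) = i - i0 + p)%N by rewrite /M; lia.
    rewrite e in hb.
    have h1 := fact_neq0 K (N - i); have h2 := fact_neq0 K (i - i0 + p).
    have hb' : ('C(M, N - i))%:R = (M`!)%:R / ((N - i)`!%:R * (i - i0 + p)`!%:R) :> K.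
      by rewrite -hb !natrM; field; rewrite h1 h2.
    by rewrite hb'; field; rewrite h1 h2.
  rewrite bin_small; first by ring.
  by move: hp hi0; rewrite /M; case/orP => /eqP h; lia.
rewrite e1 e2; split => H.
  by rewrite (mulfI hMf H) subrr.
by congr (_ * _); apply/eqP; rewrite -subr_eq0 H.
Qed.

Lemma high_low (p i0 : nat) (phi : nat -> K) (N : nat) :
  (N < i0)%N -> (-1)^+N * neg (aW p i0 phi) N - smul (ex K) (neg (aW p i0 phi)) N = 0.
Proof.
move=> hN; rewrite /neg sgnK smul_ex_neg /aW.
rewrite leqNgt hN /= big1 ?subrr // => j _; have hj := ltn_ord j.
rewrite ifF; first by ring.
by apply/negbTE; rewrite -ltnNge; lia.
Qed.

Definition cW (s : nat) (phi : nat -> K) : nat -> K := fun i => phi i * ((s - i)`!)%:R.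

Lemma low_N (s : nat) (phi : nat -> K) (r : int) (N : nat) :
  r%:~R = - s%:R :> K -> (N <= s)%N ->
  Rn r phi N <-> (-1)^+N * cW s phi N - smul (ex K) (cW s phi) N = 0.
Proof.
move=> hr hN.
set T := \sum_(i < N.+1) phi i * ('C(s - i, N - i))%:R.
have hf := fact_neq0 K (s - N).
have e1 : \sum_(i < N.+1) phi i * ((-1)^+i * gb (N%:R + r%:~R - 1) (N - i)) = (-1)^+N * T.
  rewrite /T mulr_sumr; apply: eq_bigr => i _; have hi := ltn_ord i.
  rewrite hr (_ : N%:R + - s%:R - 1 = - ((s - N)%:R + 1) :> K); last first.
    by rewrite natrB //; ring.
  rewrite gb_neg (_ : (s - N)%:R + 1 + (N - i)%:R - 1 = (s - i)%:R :> K); last first.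
    by rewrite !natrB //; [ring | lia].
  rewrite gb_nat (_ : (-1) ^+ N = (-1) ^+ i * (-1) ^+ (N - i) :> K); last first.
    by rewrite -exprD; congr (_ ^+ _); lia.
  ring.
have e2 : smul (ex K) (cW s phi) N = ((s - N)`!)%:R * T.
  rewrite smulC /smul /T mulr_sumr; apply: eq_bigr => i _; have hi := ltn_ord i.
  have hb := @bin_fact (s - i) (N - i) ltac:(lia).
  have e : (s - i - (N - i) = s - N)%N by lia.
  rewrite e in hb.
  have h1 := fact_neq0 K (N - i).
  have hb' : ('C(s - i, N - i))%:R = ((s - i)`!)%:R / ((N - i)`!%:R * (s - N)`!%:R) :> K.
    by rewrite -hb !natrM; field; rewrite h1 hf.
  rewrite hb' /cW /ex; field; by rewrite h1 hf.
rewrite /Rn e1 e2 /cW; split => H.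
  by rewrite H -[(-1)^+N * T * _]mulrA sgnK; ring.
have : ((s - N)`!)%:R * ((-1)^+N * phi N - T) = 0 by rewrite -H; ring.
move/eqP; rewrite mulf_eq0 (negbTE hf) /= subr_eq0 => /eqP H2.
by rewrite -H2 sgnK.
Qed.

End Split.

Section Trans.
Variable K : numFieldType.

Definition HC (p i0 : nat) (phi : nat -> K) (n : nat) :=
  aW p i0 phi (2 * n)%N = 2 * \sum_(i < n.+1) aW p i0 phi (2 * i).+1 * bb K (2 * n - 2 * i).

Lemma GG_neg_even (a : nat -> K) n :
  GG (neg a) (2 * n)%N = 0 <-> a (2 * n)%N = 2 * \sum_(i < n.+1) a (2 * i).+1 * bb K (2 * n - 2 * i).
Proof.
rewrite mul2n GG_even /neg -signr_odd odd_double expr0 mul1r.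
have -> : \sum_(i < n.+1) (-1) ^+ i.*2.+1 * a i.*2.+1 * bb K (n.*2 - i.*2) =
   - \sum_(i < n.+1) a (2 * i).+1 * bb K (2 * n - 2 * i).
  rewrite -sumrN; apply: eq_bigr => i _.
  by rewrite -signr_odd /= odd_double /= expr1 !mul2n; ring.
rewrite mul2n; set S := \sum_(i < n.+1) _; split => H.
  have -> : a n.*2 = a n.*2 + 2 * - S - 2 * - S by ring.
  by rewrite H; ring.
by rewrite H; ring.
Qed.

Lemma all_even (f : nat -> K) (P : nat -> Prop) :
  (forall m, GG f m.*2.+1 = 0) ->
  (forall m, P m -> GG f m = 0) <-> (forall n, P (2 * n)%N -> GG f (2 * n)%N = 0).
Proof.
move=> Ho; split => H; first by move=> n; apply: H.
move=> m; rewrite -[m]odd_double_half.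
case: (odd m) => /=; first by rewrite add1n Ho.
by rewrite add0n -mul2n; apply: H.
Qed.

Lemma zbinom_nat (a b : nat) : zbinom K (Posz a) (Posz b) = ('C(a, b))%:R.
Proof.
rewrite /zbinom /= -gb_nat /gb; congr (_ / _).
by apply: eq_bigr => i _; rewrite intrB.
Qed.

Lemma bernoulliE n : bernoulli K n = (n`!)%:R * bb K n.
Proof. by []. Qed.

Lemma star_sum (k : int) (n : nat) (F : int -> K) :
  - k <= n%:Z -> (forall i : int, i < 0 -> F i = 0) ->
  \sum_(j < absz (n%:Z + k + 1)) F (j%:Z - k) =
  \sum_(i < n.+1) (if - k <= i%:Z then F i%:Z else 0).
Proof.
move=> hk HF; case: k hk => [k'|m] hk.
  have -> : absz (n%:Z + k'%:Z + 1) = (k' + n.+1)%N by lia.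
  rewrite (sum_shift (fun j => F (j%:Z - k'%:Z)) (leq_addr _ _)) big1 ?add0r; last first.
    by move=> j _; apply: HF; have := ltn_ord j; lia.
  have -> : (k' + n.+1 - k' = n.+1)%N by lia.
  apply: eq_bigr => i _; rewrite ifT; last by lia.
  by congr F; lia.
have -> : absz (n%:Z + Negz m + 1) = (n - m)%N by lia.
have hm : (m.+1 <= n.+1)%N by lia.
rewrite (sum_shift (fun i => if - Negz m <= i%:Z then F i%:Z else 0) hm) [in RHS]big1 ?add0r; last first.
  by move=> j _; rewrite ifF //; have := ltn_ord j; lia.
have -> : (n.+1 - m.+1 = n - m)%N by lia.
apply: eq_bigr => j _; rewrite ifT; last by lia.
by congr F; lia.
Qed.

Lemma gam_neg (phi : nat -> K) (x : int) : x < 0 -> gam phi x = 0.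
Proof. by case: x. Qed.

Lemma natzR (n : nat) : (n%:Z)%:~R = n%:R :> K.
Proof. by []. Qed.

Lemma star_HC (p i0 : nat) (r k : int) (e : nat) (phi : nat -> K) (n : nat) :
  (i0 == 0)%N || (p == 0)%N -> r = 1 + p%:Z - i0%:Z -> r = 2 * k + e%:Z ->
  (e <= 1)%N -> - k <= n%:Z -> (i0 <= 2 * n)%N ->
  star phi r k n%:Z <-> HC p i0 phi n.
Proof.
move=> hp hr hk he hkn hi0.
rewrite /star /HC.
rewrite (@star_sum k n (fun i => zbinom K (2 * n%:Z + r) (2 * i + r) *
   bernoulli K (absz ((2 * n%:Z - 2 * i)%R)) * gam phi (2 * i + 1)) hkn); last first.
  by move=> i hi; rewrite gam_neg ?mulr0 //; lia.
set W := (2 * n - i0 + p)%N.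
have hW := fact_neq0 K W.
have e0 : 2 * n%:Z = ((2 * n)%N)%:Z by lia.
have e1 : (2 * n%:Z + r) = (W.+1)%:Z by rewrite /W; lia.
rewrite e0 /= e1 natzR.
have eA : aW p i0 phi (2 * n) = phi (2 * n)%N / (W`!)%:R by rewrite /aW hi0.
have eS : \sum_(i < n.+1) (if - k <= i%:Z then zbinom K (W.+1)%:Z (2 * i%:Z + r) *
            bernoulli K (absz (((2 * n)%N%:Z - 2 * i%:Z)%R)) * gam phi (2 * i%:Z + 1) else 0) =
          (W.+1)%:R * (W`!)%:R * \sum_(i < n.+1) aW p i0 phi (2 * i).+1 * bb K (2 * n - 2 * i).
  rewrite mulr_sumr; apply: eq_bigr => i _; have hi := ltn_ord i.
  rewrite /aW; case: ifP => [h1|/negbT h1]; last first.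
    rewrite ifF; first by ring.
    by apply/negbTE; move: h1; rewrite -ltnNge; lia.
  rewrite ifT; last by lia.
  set V := ((2 * i).+1 - i0 + p)%N.
  have e2 : 2 * i%:Z + r = V%:Z by rewrite /V; lia.
  have e3 : absz (((2 * n)%N%:Z - 2 * i%:Z)%R) = (2 * n - 2 * i)%N by lia.
  have e4 : 2 * i%:Z + 1 = ((2 * i).+1)%:Z by lia.
  rewrite e2 e3 e4 /= zbinom_nat bernoulliE.
  have hle : (V <= W.+1)%N by rewrite /V /W; lia.
  have hb := bin_fact hle.
  have e5 : (W.+1 - V = 2 * n - 2 * i)%N by rewrite /V /W; lia.
  rewrite e5 factS in hb.
  have hV := fact_neq0 K V; have hD := fact_neq0 K (2 * n - 2 * i).
  have hb' : ('C(W.+1, V))%:R = (W.+1)%:R * (W`!)%:R / ((V`!)%:R * ((2 * n - 2 * i)`!)%:R) :> K.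
    by rewrite -natrM -hb !natrM; field; rewrite hV hD.
  by rewrite hb'; field; rewrite hV hD.
rewrite eS eA.
have hW1 : 1 + W%:R != 0 :> K by rewrite addrC natr1 pnatr_eq0.
split => H.
  rewrite H; field; by rewrite hW1 hW.
rewrite -(mulfVK hW (phi (2 * n)%N)) H; field; by rewrite hW1.
Qed.

Lemma HC_low (p i0 : nat) (phi : nat -> K) (n : nat) :
  (i0 == 0)%N || (p == 0)%N -> (2 * n < i0)%N ->
  HC p i0 phi n <-> (i0 = (2 * n).+1 -> phi i0 = 0).
Proof.
move=> hp hn; rewrite /HC big_ord_recr /= big1 ?add0r; last first.
  move=> i _; have hi := ltn_ord i; rewrite /aW ifF ?mul0r //.
  by apply/negbTE; rewrite -ltnNge; lia.
rewrite {1}/aW ifF; last by apply/negbTE; rewrite -ltnNge; lia.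
rewrite subnn bb0 mulr1 /aW.
case: (i0 =P (2 * n).+1) => [e|ne].
  rewrite e leqnn subnn.
  have -> : p = 0%N by move: hp; rewrite e; case/orP => /eqP; lia.
  rewrite /= divr1.
  have h2 : (2 : K) != 0 by rewrite pnatr_eq0.
  split => [H _|H]; last by rewrite H ?mulr0.
  by move/eqP: H; rewrite eq_sym mulf_eq0 (negbTE h2) => /eqP.
rewrite ifF; last by apply/negbTE; rewrite -ltnNge; lia.
by rewrite mulr0; split => // _ e; case: ne.
Qed.

Lemma LC_ss (s : nat) (r : int) (phi : nat -> K) (n : nat) :
  r = - s%:Z -> (2 * n < s)%N ->
  starstar phi r n%:Z <-> GG (cW s phi) (2 * n)%N = 0.
Proof.
move=> hr hn; rewrite /starstar mul2n GG_even.
have -> : absz ((n%:Z + 1)%R) = n.+1 by lia.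
have e0 : 2 * n%:Z = ((n.*2)%N)%:Z by lia.
rewrite e0 /=.
set T := \sum_(i < n.+1) cW s phi i.*2.+1 * bb K (n.*2 - i.*2).
have hf := fact_neq0 K (s - n.*2).
have eS : \sum_(i < n.+1) 2 / (2 * i%:Z + r)%:~R * zbinom K (- 2 * i%:Z - r) (- 2 * n%:Z - r) *
      bernoulli K (absz ((n.*2%:Z - 2 * i%:Z)%R)) * gam phi (2 * i%:Z + 1) =
   - (2 / ((s - n.*2)`!)%:R) * T.
  rewrite /T mulr_sumr; apply: eq_bigr => i _; have hi := ltn_ord i.
  have e1 : (2 * i%:Z + r) = - ((s - i.*2)%N%:Z) by lia.
  have e2 : (- 2 * i%:Z - r) = ((s - i.*2)%N%:Z) by lia.
  have e3 : (- 2 * n%:Z - r) = ((s - n.*2)%N%:Z) by lia.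
  have e4 : absz ((n.*2%:Z - 2 * i%:Z)%R) = (n.*2 - i.*2)%N by lia.
  have e5 : 2 * i%:Z + 1 = (i.*2.+1)%N%:Z by lia.
  rewrite e1 e2 e3 e4 e5 /= zbinom_nat bernoulliE mulrNz natzR /cW.
  have hle : (s - n.*2 <= s - i.*2)%N by lia.
  have hb := bin_fact hle.
  have e6 : (s - i.*2 - (s - n.*2) = n.*2 - i.*2)%N by lia.
  have e7 : (s - i.*2 = (s - i.*2.+1).+1)%N by lia.
  rewrite e6 in hb.
  have hD := fact_neq0 K (n.*2 - i.*2); have hE := fact_neq0 K (s - i.*2.+1).
  have hsi : (s - i.*2)%:R != 0 :> K by rewrite pnatr_eq0; lia.
  have hF : ((s - i.*2)`!)%:R = (s - i.*2)%:R * ((s - i.*2.+1)`!)%:R :> K.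
    by rewrite [in LHS]e7 factS natrM -e7.
  have hb' : ('C(s - i.*2, s - n.*2))%:R = (s - i.*2)%:R * ((s - i.*2.+1)`!)%:R /
        (((s - n.*2)`!)%:R * ((n.*2 - i.*2)`!)%:R) :> K.
    rewrite -hF -hb !natrM; field; by rewrite hf hD.
  rewrite hb'; field; by rewrite hf hD hsi.
rewrite eS; split => H.
  rewrite /cW H; field; by rewrite hf.
have H2 : phi n.*2 * (s - n.*2)`!%:R = - (2 * T).
  by apply/eqP; rewrite -addr_eq0 -H /cW.
rewrite -(mulfK hf (phi n.*2)) H2; field; by rewrite hf.
Qed.

End Trans.

Section Final.
Variable K : numFieldType.

Definition LowC (s : nat) (phi : nat -> K) :=
  forall n, (2 * n < s)%N -> GG (cW s phi) (2 * n)%N = 0.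

Lemma char_gen (p i0 : nat) (r : int) (phi : nat -> K) :
  (i0 == 0)%N || (p == 0)%N -> r = 1 + p%:Z - i0%:Z ->
  inF r phi <-> (forall n, HC p i0 phi n) /\ LowC i0.-1 phi.
Proof.
move=> hp hr.
have hrK : r%:~R = 1 + p%:R - i0%:R :> K by rewrite hr intrB intrD.
rewrite inF_R.
have Hhigh : (forall N, (i0 <= N)%N -> Rn r phi N) <-> (forall n, HC p i0 phi n).
  transitivity (forall N, (-1)^+N * neg (aW p i0 phi) N - smul (ex K) (neg (aW p i0 phi)) N = 0).
    split => H N.
      case: (leqP i0 N) => hN; first by apply: (proj1 (@high_N K p i0 phi r N hp hrK hN)); apply: H.
      exact: high_low.
    by move=> hN; apply: (proj2 (@high_N K p i0 phi r N hp hrK hN)); apply: H.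
  rewrite D_zero_all.
  have := @all_even K (neg (aW p i0 phi)) (fun _ => True) (@GG_odd K _).
  move=> [H1 H2]; split => H.
    by move=> n; apply/GG_neg_even; apply: H1 => // m _; apply: H.
  by move=> m; apply: H2 => // n _; apply/GG_neg_even; apply: H.
have Hlow : (forall N, (N < i0)%N -> Rn r phi N) <-> LowC i0.-1 phi.
  case: i0 hp hr hrK Hhigh => [|s] hp hr hrK Hhigh.
    by split => // _ n; rewrite /= ltn0.
  have hp0 : p = 0%N by move: hp => /= /eqP.
  have hrs : r%:~R = - s%:R :> K by rewrite hrK hp0 -natr1; ring.
  rewrite /LowC /=.
  transitivity (forall N, (N <= s)%N -> (-1)^+N * cW s phi N - smul (ex K) (cW s phi) N = 0).
    split => H N hN.
      by apply: (proj1 (@low_N K s phi r N hrs hN)); apply: H; lia.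
    by apply: (proj2 (@low_N K s phi r N hrs hN)); apply: H.
  rewrite D_zero_iff.
  exact: (@all_even K (cW s phi) (fun m => (m < s)%N) (@GG_odd K _)).
rewrite -Hhigh -Hlow; split => H.
  by split => N _; apply: H.
move=> N; case: (leqP i0 N) => hN; [exact: H.1 | exact: H.2].
Qed.

Lemma starall (p i0 : nat) (r k : int) (e : nat) (phi : nat -> K) (L0 : int) :
  (i0 == 0)%N || (p == 0)%N -> r = 1 + p%:Z - i0%:Z -> r = 2 * k + e%:Z -> (e <= 1)%N ->
  (forall n : int, L0 <= n <-> (0 <= n /\ i0%:Z <= 2 * n)) ->
  (forall n : int, L0 <= n -> star phi r k n) <-> (forall n : nat, (i0 <= 2 * n)%N -> HC p i0 phi n).
Proof.
move=> hp hr hk he hL; split => H.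
  move=> n hn; apply: (proj1 (@star_HC K p i0 r k e phi n hp hr hk he _ hn)).
    by move: hp => /orP [/eqP h|/eqP h]; lia.
  by apply: H; apply/hL; split; lia.
move=> n /hL [h1 h2]; case: n h1 h2 => [n|n] h1 h2; last by [].
have hn : (i0 <= 2 * n)%N by lia.
apply: (proj2 (@star_HC K p i0 r k e phi n hp hr hk he _ hn)); last exact: H.
by move: hp => /orP [/eqP h|/eqP h]; lia.
Qed.

Lemma ss_iff (p i0 : nat) (r k : int) (e : nat) (phi : nat -> K) :
  (i0 == 0)%N || (p == 0)%N -> r = 1 + p%:Z - i0%:Z -> r = 2 * k + e%:Z -> (e <= 1)%N ->
  (r < 0 -> forall n : int, 0 <= n <= - k - 1 -> starstar phi r n) <-> LowC i0.-1 phi.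
Proof.
move=> hp hr hk he.
case: i0 hp hr => [|s] hp hr.
  split => _; last by move=> hr0; exfalso; lia.
  by move=> n; rewrite /= ltn0.
have hp0 : p = 0%N by move: hp => /= /eqP.
have hrs : r = - s%:Z by lia.
rewrite /LowC /=; split => H.
  move=> n hn; apply: (proj1 (@LC_ss K s r phi n hrs hn)); apply: H; first by lia.
  by apply/andP; split; lia.
move=> hr0 n /andP [h1 h2]; case: n h1 h2 => [n|n] h1 h2; last by [].
have hn : (2 * n < s)%N by lia.
by apply: (proj2 (@LC_ss K s r phi n hrs hn)); apply: H.
Qed.

Lemma gam_iff (p i0 : nat) (r k : int) (phi : nat -> K) :
  (i0 == 0)%N || (p == 0)%N -> r = 1 + p%:Z - i0%:Z -> r = 2 * k ->
  (r <= 0 -> gam phi (1 - r) = 0) <-> (forall n : nat, (2 * n < i0)%N -> HC p i0 phi n).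
Proof.
move=> hp hr hk.
case: i0 hp hr => [|s] hp hr.
  by split => _; [move=> n; rewrite ltn0 | move=> hr0; exfalso; lia].
have hp0 : p = 0%N by move: hp => /= /eqP.
have e1 : 1 - r = (s.+1)%:Z by lia.
rewrite e1 /=; split => H.
  move=> n hn; apply/(HC_low phi hp hn) => _; apply: H; lia.
move=> _.
have hn : (2 * `|- k|%N < s.+1)%N by lia.
apply: (proj1 (HC_low phi hp hn) (H _ hn)); lia.
Qed.

Lemma odd_low (p i0 : nat) (r k : int) (phi : nat -> K) :
  (i0 == 0)%N || (p == 0)%N -> r = 1 + p%:Z - i0%:Z -> r = 2 * k + 1 ->
  forall n : nat, (2 * n < i0)%N -> HC p i0 phi n.
Proof.
move=> hp hr hk n hn; apply/(HC_low phi hp hn) => h; exfalso.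
by move: hp => /orP [/eqP h'|/eqP h']; lia.
Qed.

End Final.

Unset Implicit Arguments.

Theorem theorem5p9 (K : numFieldType) (phi : nat -> K) (r : int) :
  inF r phi <->
  ((forall k : int, r = 2 * k ->
      (forall n : int, Num.max 0 (1 - k) <= n -> star phi r k n) /\
      (r <= 0 -> gam phi (1 - r) = 0) /\
      (r < 0 -> forall n : int, 0 <= n <= - k - 1 -> starstar phi r n)) /\
   (forall k : int, r = 2 * k + 1 ->
      (forall n : int, Num.max 0 (- k) <= n -> star phi r k n) /\
      (r < 0 -> forall n : int, 0 <= n <= - k - 1 -> starstar phi r n))).
Proof.
have [p [i0 [hp hr]]] : exists p i0 : nat, ((i0 == 0)%N || (p == 0)%N) /\ r = 1 + p%:Z - i0%:Z.
  case: (ltrP 0 r) => h.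
    by exists (absz r - 1)%N, 0%N; split; [rewrite eqxx | lia].
  by exists 0%N, (absz (1 - r)); split; [rewrite eqxx orbT | lia].
have [k [e [hk he]]] : exists (k : int) (e : nat), r = 2 * k + e%:Z /\ (e <= 1)%N.
  exists (r %/ 2)%Z, (absz (r %% 2)%Z); lia.
rewrite (char_gen phi hp hr).
have Hsplit : (forall n, HC p i0 phi n) <->
   (forall n, (i0 <= 2 * n)%N -> HC p i0 phi n) /\ (forall n, (2 * n < i0)%N -> HC p i0 phi n).
  split => [H|[H1 H2] n]; first by split => n _; apply: H.
  by case: (leqP i0 (2 * n)) => h; [apply: H1 | apply: H2].
rewrite Hsplit.
have hcase : (i0 = 0%N /\ p = 0%N) \/ (i0 = 0%N /\ p <> 0%N) \/ (i0 <> 0%N /\ p = 0%N).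
  by move: hp => /orP [/eqP h|/eqP h]; lia.
case: e hk he => [|[|e]] hk he //.
- have hk0 : r = 2 * k by lia.
  have hL : forall n : int, Num.max 0 (1 - k) <= n <-> (0 <= n /\ i0%:Z <= 2 * n).
    by move=> n; split => [h|[h1 h2]]; [split|]; lia.
  have Hst := starall phi hp hr hk he hL.
  have Hss := ss_iff phi hp hr hk he.
  have Hg := gam_iff phi hp hr hk0.
  split.
    move=> [[H1 H2] H3]; split => k' hk'; last by exfalso; lia.
    have ekk : k' = k by lia.
    subst k'; split; first by apply/Hst.
    by split; [apply/Hg | apply/Hss].
  move=> [HE _]; have [Hs [Hg' Hss']] := HE k hk0.
  by split; [split; [apply/Hst | apply/Hg] | apply/Hss].
- have hk1 : r = 2 * k + 1 by lia.
  have hL : forall n : int, Num.max 0 (- k) <= n <-> (0 <= n /\ i0%:Z <= 2 * n).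
    by move=> n; split => [h|[h1 h2]]; [split|]; lia.
  have Hst := starall phi hp hr hk he hL.
  have Hss := ss_iff phi hp hr hk he.
  split.
    move=> [[H1 H2] H3]; split => k' hk'; first by exfalso; lia.
    have ekk : k' = k by lia.
    by subst k'; split; [apply/Hst | apply/Hss].
  move=> [_ HO]; have [Hs Hss'] := HO k hk1.
  split; [split; [apply/Hst | exact: (odd_low phi hp hr hk1)] | apply/Hss] => //.
Qed.
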